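(* Let $N=\{A,B,C,D,E\}$. The formal dual of the linear form $$Q=I(A;B\mid C)+I(A;B\mid D)+I(C;D)-I(A;B)+I(A;B\mid E)+I(A;E\mid B)+I(B;E\mid A)$$ is the linear form $$Q^\perp=I(C;D\mid AE)+I(C;D\mid BE)+I(A;B\mid E)-I(C;D\mid E)+I(A;B\mid CD)+I(A;E\mid CD)+I(B;E\mid CD).$$ Moreover, for $0<\varepsilon<1/4$ let $(A,B,C,D,E)$ be binary random variables with joint distribution giving probability $\varepsilon$ to each of the tuples $(0,0,0,0,0),(0,1,1,0,0),(1,0,0,1,0),(1,1,0,0,0)$ and probability $1/4-\varepsilon$ to each of $(0,0,0,0,1),(0,1,0,0,1),(1,0,0,0,1),(1,1,0,0,1)$ (listed as $(A,B,C,D,E)$). Then, evaluated on the entropic vector of this distribution, $Q^\perp<0$ for all sufficiently small $\varepsilon>0$. In particular $Q^\perp\ge 0$ is not a valid information inequality.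
   Context: For random variables, $I(X;Y\mid Z)=H(XZ)+H(YZ)-H(XYZ)-H(Z)$ is conditional mutual information ($H$ Shannon entropy, juxtaposition denotes joint variables, $I(X;Y)=I(X;Y\mid\varnothing)$); the same expression defines a linear form on vectors $h$ indexed by subsets of $N$ (with $h(\varnothing)=0$). The dual of $h$ is $h^\perp(J)=h(N\setminus J)-h(N)+\sum_{j\in J}h(\{j\})$, and the formal dual of a linear form $c$ is the linear form $h\mapsto c(h^\perp)$. (The inequality $Q\ge 0$ is a known valid non-Shannon information inequality.) *)

(* Defs.v *)
From Stdlib Require Import Reals List.
Open Scope R_scope.

(* Ground set N = {A,B,C,D,E}.  A subset of N is a 5-tuple of booleans
   (membership of A,B,C,D,E respectively).  The same type is used for
   outcomes of the five binary random variables (A,B,C,D,E). *)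
Record S5 := mkS5 { cA : bool; cB : bool; cC : bool; cD : bool; cE : bool }.

Definition emptyS : S5 := mkS5 false false false false false.
Definition fullS  : S5 := mkS5 true true true true true.
Definition sA : S5 := mkS5 true false false false false.
Definition sB : S5 := mkS5 false true false false false.
Definition sC : S5 := mkS5 false false true false false.
Definition sD : S5 := mkS5 false false false true false.
Definition sE : S5 := mkS5 false false false false true.

Definition su (X Y : S5) : S5 :=
  mkS5 (cA X || cA Y) (cB X || cB Y) (cC X || cC Y) (cD X || cD Y) (cE X || cE Y).
Definition scompl (X : S5) : S5 :=
  mkS5 (negb (cA X)) (negb (cB X)) (negb (cC X)) (negb (cD X)) (negb (cE X)).

Definition vec := S5 -> R.
Definition lform := vec -> R.

Definition CMI (X Y Z : S5) (h : vec) : R :=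
  h (su X Z) + h (su Y Z) - h (su (su X Y) Z) - h Z.
Definition MI (X Y : S5) (h : vec) : R := CMI X Y emptyS h.

Definition dualv (h : vec) : vec := fun J =>
  h (scompl J) - h fullS
  + ((if cA J then h sA else 0) + (if cB J then h sB else 0)
     + (if cC J then h sC else 0) + (if cD J then h sD else 0)
     + (if cE J then h sE else 0)).

Definition formal_dual (c : lform) : lform := fun h => c (dualv h).

Definition Q : lform := fun h =>
  CMI sA sB sC h + CMI sA sB sD h + MI sC sD h - MI sA sB h
  + CMI sA sB sE h + CMI sA sE sB h + CMI sB sE sA h.

Definition Qperp : lform := fun h =>
  CMI sC sD (su sA sE) h + CMI sC sD (su sB sE) h + CMI sA sB sE h
  - CMI sC sD sE h + CMI sA sB (su sC sD) h + CMI sA sE (su sC sD) h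
  + CMI sB sE (su sC sD) h.

Definition bools : list bool := true :: false :: nil.
Definition all5 : list S5 :=
  flat_map (fun a => flat_map (fun b => flat_map (fun c => flat_map (fun d =>
    map (fun e => mkS5 a b c d e) bools) bools) bools) bools) bools.

Definition sum5 (f : S5 -> R) : R := fold_right (fun x acc => f x + acc) 0 all5.

Definition agree (J x y : S5) : bool :=
  (implb (cA J) (Bool.eqb (cA x) (cA y))) && (implb (cB J) (Bool.eqb (cB x) (cB y)))
  && (implb (cC J) (Bool.eqb (cC x) (cC y))) && (implb (cD J) (Bool.eqb (cD x) (cD y)))
  && (implb (cE J) (Bool.eqb (cE x) (cE y))).

(* x is the canonical representative of its J-marginal value (zero off J) *)
Definition zero_off (J x : S5) : bool :=
  (implb (negb (cA J)) (negb (cA x))) && (implb (negb (cB J)) (negb (cB x)))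
  && (implb (negb (cC J)) (negb (cC x))) && (implb (negb (cD J)) (negb (cD x)))
  && (implb (negb (cE J)) (negb (cE x))).

Definition marg (p : S5 -> R) (J x : S5) : R :=
  sum5 (fun y => if agree J x y then p y else 0).

Definition log2 (x : R) : R := ln x / ln 2.
(* -t log t with the convention 0 log 0 = 0 *)
Definition negxlogx (t : R) : R := if Rle_dec t 0 then 0 else - (t * log2 t).

Definition entropy_vec (p : S5 -> R) : vec := fun J =>
  sum5 (fun x => if zero_off J x then negxlogx (marg p J x) else 0).

Definition b2n (b : bool) : nat := if b then 1%nat else 0%nat.
Definition tup (x : S5) : list nat :=
  map b2n (cA x :: cB x :: cC x :: cD x :: cE x :: nil).

Definition peps (eps : R) (x : S5) : R :=
  match tup x return R with
  | 0::0::0::0::0::nil | 0::1::1::0::0::nil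
  | 1::0::0::1::0::nil | 1::1::0::0::0::nil => eps
  | 0::0::0::0::1::nil | 0::1::0::0::1::nil
  | 1::0::0::0::1::nil | 1::1::0::0::1::nil => 1/4 - eps
  | _ => 0
  end.

(* Main.v *)
Require Import Defs.
From Stdlib Require Import Reals.
From Stdlib Require Import Lra List.
Open Scope R_scope.
Lemma p1 : forall h : vec, h emptyS = 0 -> formal_dual Q h = Qperp h.
Proof.
intros h H0. unfold formal_dual, Q, Qperp, CMI, MI, dualv.
lazy beta iota zeta delta [CMI MI su scompl sA sB sC sD sE emptyS fullS cA cB cC cD cE orb negb].
unfold emptyS in H0. rewrite ?H0. ring.
Qed.
Definition nx := negxlogx.
Lemma nx_eq a b : a = b -> negxlogx a = nx b. Proof. intros ->; reflexivity. Qed.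
Lemma nx0 : nx 0 = 0. Proof. unfold nx, negxlogx. destruct (Rle_dec 0 0); lra. Qed.
Lemma nxpos t : 0 < t -> nx t = - (t * (ln t / ln 2)).
Proof. intro. unfold nx, negxlogx, log2. destruct (Rle_dec t 0); lra. Qed.
Lemma ln_le x : 0 < x -> ln x <= x - 1.
Proof. intro. pose proof (exp_ineq1_le (ln x)). rewrite exp_ln in H0; lra. Qed.

Lemma comp eps : Qperp (entropy_vec (peps eps)) =
  -8 * nx eps + 7 * nx (2*eps) - 6 * nx (1/4-eps) + nx (1-4*eps) - 2 * nx (3*eps)
  + 8 * nx (1/2-eps) - 2 * nx (1/4) - 3 * nx (1-2*eps).
Proof.
unfold Qperp.
lazy beta iota zeta delta [CMI MI su scompl sA sB sC sD sE emptyS fullS cA cB cC cD cE orb negb andb implb Bool.eqb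
  entropy_vec sum5 all5 flat_map map bools app fold_right zero_off marg agree peps tup b2n].
rewrite ?Rplus_0_l, ?Rplus_0_r.
repeat match goal with |- context [negxlogx ?a] =>
  first [ rewrite (nx_eq a 0) by lra | rewrite (nx_eq a eps) by lra | rewrite (nx_eq a (2*eps)) by lra
        | rewrite (nx_eq a (3*eps)) by lra | rewrite (nx_eq a (4*eps)) by lra
        | rewrite (nx_eq a (1/4-eps)) by lra | rewrite (nx_eq a (1/4)) by lra
        | rewrite (nx_eq a (1/2-eps)) by lra | rewrite (nx_eq a (1/2)) by lra
        | rewrite (nx_eq a (1-4*eps)) by lra | rewrite (nx_eq a (1-2*eps)) by lra
        | rewrite (nx_eq a (1/2-2*eps)) by lra | rewrite (nx_eq a (1/4+eps)) by lra
        | rewrite (nx_eq a (1/2+eps)) by lra | rewrite (nx_eq a (1-3*eps)) by lra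
        | rewrite (nx_eq a (3/4-3*eps)) by lra | rewrite (nx_eq a (3/4-2*eps)) by lra
        | rewrite (nx_eq a (1)) by lra
        | idtac "FAIL" a; fail 2 ] end.
rewrite nx0. ring.
Qed.

Lemma key eps : 0 < eps -> eps < 1/4 -> eps < (10 * ln 2 - 6 * ln 3) / 8 ->
  -8 * nx eps + 7 * nx (2*eps) - 6 * nx (1/4-eps) + nx (1-4*eps) - 2 * nx (3*eps)
  + 8 * nx (1/2-eps) - 2 * nx (1/4) - 3 * nx (1-2*eps) < 0.
Proof.
intros He1 He2 Hd.
assert (L2 : 0 < ln 2) by (rewrite <- ln_1; apply ln_increasing; lra).
rewrite !nxpos by lra.
assert (E1 : ln (2*eps) = ln 2 + ln eps) by (apply ln_mult; lra).
assert (E2 : ln (3*eps) = ln 3 + ln eps) by (apply ln_mult; lra).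
assert (E3 : ln (1/4 - eps) = ln (1 - 4*eps) - 2 * ln 2).
{ replace (1/4 - eps) with ((1-4*eps) * / (2*2)) by field.
  rewrite ln_mult, ln_Rinv, ln_mult; lra. }
assert (E4 : ln (1/2 - eps) = ln (1 - 2*eps) - ln 2).
{ replace (1/2 - eps) with ((1-2*eps) * / 2) by field.
  rewrite ln_mult, ln_Rinv; lra. }
assert (E5 : ln (1/4) = - (2 * ln 2)).
{ replace (1/4) with (/ (2*2)) by field. rewrite ln_Rinv, ln_mult; lra. }
rewrite E1, E2, E3, E4, E5.
set (x := ln (1 - 4*eps)). set (y := ln (1 - 2*eps)).
assert (Hx : x <= - 4 * eps) by (unfold x; pose proof (ln_le (1-4*eps)); lra).
assert (Hy : - y <= 1 / (1 - 2*eps) - 1).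
{ unfold y. rewrite <- ln_Rinv by lra. replace (1/(1-2*eps)) with (/(1-2*eps)) by (field; lra).
  apply ln_le. apply Rinv_0_lt_compat; lra. }
assert (Hy' : - (1 - 2*eps) * y <= 2 * eps).
{ assert (Hm : (1-2*eps) * (1/(1-2*eps) - 1) = 2*eps) by (field; lra).
  assert (Hk : (1-2*eps) * (-y) <= (1-2*eps) * (1/(1-2*eps) - 1)) by (apply Rmult_le_compat_l; lra).
  replace (- (1 - 2*eps) * y) with ((1-2*eps) * (-y)) by ring. lra. }
assert (Hx' : (1 - 4*eps) * x <= (1 - 4*eps) * (-4*eps)) by (apply Rmult_le_compat_l; lra).
set (T := ln 3). set (L := ln 2). set (a := ln eps).
assert (Heq : -8 * - (eps * (a / L)) + 7 * - (2 * eps * ((L + a) / L)) -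
 6 * - ((1 / 4 - eps) * ((x - 2 * L) / L)) + - ((1 - 4 * eps) * (x / L)) -
 2 * - (3 * eps * ((T + a) / L)) + 8 * - ((1 / 2 - eps) * ((y - L) / L)) -
 2 * - (1 / 4 * (- (2 * L) / L)) - 3 * - ((1 - 2 * eps) * (y / L))
 = (eps * (6*T - 10*L) + (1-4*eps)/2 * x - (1-2*eps) * y) / L) .
field. unfold L; lra.
rewrite Heq.
apply Rdiv_neg_pos; [|exact L2].
assert (Hq : eps * (8*eps) < eps * (10 * L - 6 * T)) by (apply Rmult_lt_compat_l; [lra| unfold L, T; lra]).
lra.
Qed.

Lemma dpos : 0 < (10 * ln 2 - 6 * ln 3) / 8.
Proof.
assert (H : ln (3^6) < ln (2^10)) by (apply ln_increasing; [apply pow_lt; lra | ring_simplify; lra]).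
rewrite !ln_pow in H by lra.
assert (INR 6 = 6) by (simpl; ring). assert (INR 10 = 10) by (simpl; ring).
rewrite H0, H1 in H. lra.
Qed.

Theorem mainTheorem6 :
  (forall h : vec, h emptyS = 0 -> formal_dual Q h = Qperp h) /\
  (exists delta : R, 0 < delta /\
     forall eps : R, 0 < eps -> eps < 1/4 -> eps < delta ->
       Qperp (entropy_vec (peps eps)) < 0) /\
  (exists eps : R, 0 < eps /\ eps < 1/4 /\ Qperp (entropy_vec (peps eps)) < 0).
Proof.
pose proof dpos as Hd.
assert (M : forall eps : R, 0 < eps -> eps < 1/4 -> eps < (10 * ln 2 - 6 * ln 3) / 8 ->
       Qperp (entropy_vec (peps eps)) < 0).
{ intros. rewrite comp. apply key; assumption. }
split; [exact p1|]. split.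
- exists ((10 * ln 2 - 6 * ln 3) / 8). split; [exact Hd | exact M].
- set (d := (10 * ln 2 - 6 * ln 3) / 8) in *.
  exists (Rmin (d/2) (1/8)).
  assert (0 < Rmin (d/2) (1/8)) by (apply Rmin_glb_lt; lra).
  pose proof (Rmin_l (d/2) (1/8)). pose proof (Rmin_r (d/2) (1/8)).
  split; [lra|]. split; [lra|]. apply M; lra.
Qed.
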